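(* Let $A\ge 3$, $N\ge 2$, and let $w:\mathbf{Prof}\to\mathbf{Pref}$ be a social welfare function satisfying IIA with pairwise comparison functions $s_1,\dots,s_A:\{0,e,1\}^N\to\{0,e,1\}$, and satisfying Unanimity and Unrestricted Domain. Then: (1) for every $j\in\{1,\dots,A\}$ and every $x\in\{0,1\}^N$, $s_j(\neg x)=\neg s_j(x)$; (2) for every $x\in\{0,1\}^N$, $s_1(x)=s_2(x)=\dots=s_A(x)$.
   Context: Let $\mathcal{A}=\{a_1,\dots,a_A\}$ and $N\ge 2$ individuals; $e$ is a third symbol distinct from $0,1$. Let $\sigma(i)=i+1$ for $i<A$, $\sigma(A)=1$. A preference relation is $t\in\{0,e,1\}^A$, where $t_i$ records $a_i$ versus $a_{\sigma(i)}$: $0$ means $a_i\prec a_{\sigma(i)}$, $1$ means $a_{\sigma(i)}\prec a_i$, $e$ means $a_i\sim a_{\sigma(i)}$. It corresponds to a weak order if some complete transitive relation on $\mathcal{A}$ realizes all these comparisons; otherwise it is a preference cycle. $\mathbf{Pref}=\{0,e,1\}^A$. A profile is an $A\times N$ matrix over $\{0,e,1\}$ whose every column corresponds to a weak order; $\mathbf{Prof}$ is the set of profiles, written in row form $(r_1,\dots,r_A)$ with $r_j\in\{0,e,1\}^N$. A social welfare function is a map $w:\mathbf{Prof}\to\mathbf{Pref}$. It satisfies IIA if there are functions $s_1,\dots,s_A:\{0,e,1\}^N\to\{0,e,1\}$ (pairwise comparison functions) with $w(r_1,\dots,r_A)=(s_1(r_1),\dots,s_A(r_A))$ for every profile. Unanimity: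 $s_j(\Delta x)=x$ for all $j$ and $x\in\{0,1\}$, where $\Delta x=(x,\dots,x)$. Unrestricted Domain: $w(m)$ corresponds to a weak order for every profile $m$. Negation $\neg$ maps $0\mapsto1$, $1\mapsto0$, $e\mapsto e$, acting entrywise on tuples. *)

(* Defs.v *)
From mathcomp Require Import all_boot.
Set Implicit Arguments. Unset Strict Implicit. Unset Printing Implicit Defensive.

Inductive sym := S0 | Se | S1.

Definition neg (a : sym) : sym :=
  match a with S0 => S1 | S1 => S0 | Se => Se end.

Definition negv (N : nat) (x : {ffun 'I_N -> sym}) : {ffun 'I_N -> sym} :=
  [ffun k => neg (x k)].

(* Alternatives are indexed by 'I_A (a_1..a_A ~ 0..A-1); sigma is the cyclic
   successor ordS : i |-> (i+1) mod A.  A preference relation t : 'I_A -> sym,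
   t i records a_i versus a_(sigma i).  R x y is read "x is weakly preferred to
   by y", i.e. x ≼ y. *)
Definition realizes (A : nat) (R : 'I_A -> 'I_A -> Prop) (t : 'I_A -> sym) : Prop :=
  forall i : 'I_A,
    match t i with
    | S0 => R i (ordS i) /\ ~ R (ordS i) i
    | S1 => R (ordS i) i /\ ~ R i (ordS i)
    | Se => R i (ordS i) /\ R (ordS i) i
    end.

Definition is_weak_order (A : nat) (t : 'I_A -> sym) : Prop :=
  exists R : 'I_A -> 'I_A -> Prop,
    (forall x y, R x y \/ R y x) /\
    (forall x y z, R x y -> R y z -> R x z) /\
    realizes R t.

Definition pref (A : nat) := {ffun 'I_A -> sym}.

Definition matrixAN (A N : nat) := {ffun 'I_A -> {ffun 'I_N -> sym}}.

Definition is_profile (A N : nat) (m : matrixAN A N) : Prop :=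
  forall k : 'I_N, is_weak_order (fun i : 'I_A => m i k).

Definition IIA (A N : nat) (w : matrixAN A N -> pref A)
  (s : 'I_A -> {ffun 'I_N -> sym} -> sym) : Prop :=
  forall m, is_profile m -> forall j : 'I_A, w m j = s j (m j).

Definition unanimity (A N : nat) (s : 'I_A -> {ffun 'I_N -> sym} -> sym) : Prop :=
  forall (j : 'I_A) (x : sym), (x = S0 \/ x = S1) -> s j [ffun _ => x] = x.

Definition unrestricted_domain (A N : nat) (w : matrixAN A N -> pref A) : Prop :=
  forall m, is_profile m -> is_weak_order (w m).

Definition binary (N : nat) (x : {ffun 'I_N -> sym}) : Prop :=
  forall k, x k <> Se.

(* Main.v *)
Require Import Defs.
From mathcomp Require Import all_boot.
From mathcomp Require Import zify.
From HB Require Import structures.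
Set Implicit Arguments. Unset Strict Implicit.

Definition sym_eqb (a b : sym) : bool :=
  match a, b with S0, S0 | Se, Se | S1, S1 => true | _, _ => false end.
Lemma sym_eqP : Equality.axiom sym_eqb.
Proof. by case; case; constructor. Qed.
HB.instance Definition _ := hasDecEq.Build sym sym_eqP.

Lemma iter_ordS n (i : 'I_n) k : val (iter k (@ordS n) i) = (i + k) %% n.
Proof.
elim: k => [|k IH] /=; first by rewrite addn0 modn_small.
by rewrite IH -addn1 modnDml addn1 addnS.
Qed.

Lemma nec (A : nat) (t : 'I_A -> sym) : is_weak_order t ->
  (forall i, t i <> S1) -> forall i, t i <> S0.
Proof.
case=> R [tot [tr real]] h1 i0 h0.
have step : forall i, R i (ordS i).
  by move=> i; move: (real i) (h1 i); case: (t i) => //; tauto.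
have key : forall k, R (ordS i0) (iter k (@ordS A) (ordS i0)).
  elim => [|k IH]; first by case: (tot (ordS i0) (ordS i0)).
  exact: tr _ _ _ IH (step _).
have A0 : 0 < A := leq_ltn_trans (leq0n _) (ltn_ord i0).
have eq : iter A.-1 (@ordS A) (ordS i0) = i0.
  apply: val_inj; rewrite iter_ordS /= modnDml.
  have -> : i0.+1 + A.-1 = i0 + A by lia.
  by rewrite modnDr modn_small.
have := key A.-1; rewrite eq.
by move: (real i0); rewrite h0; tauto.
Qed.

Lemma weak_neg (A : nat) (t : 'I_A -> sym) : is_weak_order t ->
  is_weak_order (fun i => neg (t i)).
Proof.
case=> R [tot [tr real]].
exists (fun x y => R y x); split; [|split].
- by move=> x y; case: (tot x y); [right|left].
- by move=> x y z a b; exact: tr _ _ _ b a.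
- by move=> i; move: (real i); case: (t i) => /=; tauto.
Qed.

Lemma weak_ext (A : nat) (t t' : 'I_A -> sym) : (forall i, t i = t' i) ->
  is_weak_order t -> is_weak_order t'.
Proof.
move=> E [R [tot [tr real]]]; exists R; split => //; split => //.
by move=> i; rewrite -E; exact: real.
Qed.

Lemma nec' (A : nat) (t : 'I_A -> sym) c : (c = S0 \/ c = S1) ->
  is_weak_order t -> (forall i, t i <> neg c) -> forall i, t i <> c.
Proof.
case=> -> hw h.
- exact: nec hw h.
- move=> i ti.
  have h' : forall k, neg (t k) <> S1 by move=> k /=; case: (t k) (h k).
  have := nec (weak_neg hw) h' (i:=i); rewrite /= ti; by [].
Qed.

Lemma ordS_val A (i : 'I_A) :
  (i.+1 < A /\ nat_of_ord (ordS i) = i.+1) \/ (i.+1 = A /\ nat_of_ord (ordS i) = 0).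
Proof.
rewrite /=; case: (ltngtP i.+1 A) => H.
- by left; rewrite modn_small.
- by have := ltn_ord i; lia.
- by right; rewrite H modnn.
Qed.

Lemma suff0 A (t : 'I_A -> sym) p : 1 < A -> t p = S1 ->
  (forall i, i != p -> t i = S0) -> is_weak_order t.
Proof.
move=> A1 tp ti.
pose h (i : 'I_A) := if (i <= p)%N then i + A - p - 1 else i - p - 1.
exists (fun x y => h x <= h y); split; [|split].
- by move=> x y; case: (leqP (h x) (h y)) => H; [left|right; lia].
- by move=> x y z; exact: leq_trans.
- move=> i; have Hi := ltn_ord i; have Hp := ltn_ord p.
  case: (eqVneq i p) => [->|ne].
  + have Ho := ordS_val p.
    rewrite tp /h leqnn.
    case: (leqP (ordS p) p) => H1; lia.
  + have Ho := ordS_val i.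
    rewrite ti // /h.
    have ne' : nat_of_ord i <> nat_of_ord p by move=> E; move/eqP: ne; apply; apply: val_inj.
    case: (leqP (ordS i) p) => H1; case: (leqP i p) => H2; lia.
Qed.

Lemma suff A (t : 'I_A -> sym) p c : 1 < A -> (c = S0 \/ c = S1) ->
  t p = neg c -> (forall i, i != p -> t i = c) -> is_weak_order t.
Proof.
move=> A1 [->|->] tp ti.
- exact: suff0 A1 tp ti.
- apply: (weak_ext (t := fun i => neg (neg (t i)))); first by move=> i; case: (t i).
  apply: weak_neg; apply: (suff0 (p := p)) => //; first by rewrite tp.
  by move=> i ne; rewrite ti.
Qed.

Lemma third a b : exists k, k < 3 /\ k != a /\ k != b.
Proof.
case: a => [|[|a]]; case: b => [|[|b]]; first [by exists 2 | by exists 1 | by exists 0].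
Qed.

Lemma third_ord A (hA : 3 <= A) (j j' : 'I_A) : exists k : 'I_A, k != j /\ k != j'.
Proof.
have [k [k3 [kj kj']]] := third j j'.
have kA : k < A by lia.
exists (Ordinal kA); split; apply/negP => /eqP E; move: kj kj'; rewrite -E /=; lia.
Qed.

Section Main.
Variables (A N : nat) (hA : 3 <= A) (w : matrixAN A N -> pref A)
  (s : 'I_A -> {ffun 'I_N -> sym} -> sym)
  (hIIA : IIA w s) (hU : unanimity s) (hUD : unrestricted_domain w).

Lemma half (j j' : 'I_A) (x : {ffun 'I_N -> sym}) c : j != j' -> binary x ->
  (c = S0 \/ c = S1) -> s j x = neg c \/ s j' (negv x) = neg c.
Proof.
move=> jj bx hc.
pose m : matrixAN A N := [ffun i => if i == j then x else if i == j' then negv x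
   else [ffun _ => c]].
have A1 : 1 < A by lia.
have hm : is_profile m.
  move=> k; move: (bx k); rewrite /m; case: hc (hc) => -> hc'; case E: (x k) => // _ /=.
  - apply: (@suff A _ j' _ A1 hc'); first by rewrite !ffunE eq_sym (negbTE jj) eqxx ffunE E.
    move=> i ne; rewrite !ffunE (negbTE ne); case: eqP => _; by rewrite ?ffunE ?E.
  - apply: (@suff A _ j _ A1 hc'); first by rewrite !ffunE eqxx E.
    move=> i ne; rewrite !ffunE (negbTE ne); case: eqP => _; by rewrite ?ffunE ?E.
  - apply: (@suff A _ j _ A1 hc'); first by rewrite !ffunE eqxx E.
    move=> i ne; rewrite !ffunE (negbTE ne); case: eqP => _; by rewrite ?ffunE ?E.
  - apply: (@suff A _ j' _ A1 hc'); first by rewrite !ffunE eq_sym (negbTE jj) eqxx ffunE E.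
    move=> i ne; rewrite !ffunE (negbTE ne); case: eqP => _; by rewrite ?ffunE ?E.
have hw := hUD hm.
have [k [kj kj']] := third_ord hA j j'.
have wk : w m k = c.
  by rewrite hIIA // /m ffunE (negbTE kj) (negbTE kj') hU.
have wj : w m j = s j x by rewrite hIIA // /m ffunE eqxx.
have wj' : w m j' = s j' (negv x) by rewrite hIIA // /m ffunE eq_sym (negbTE jj) eqxx.
case: (s j x =P neg c) => [|n1]; first by left.
case: (s j' (negv x) =P neg c) => [|n2]; first by right.
exfalso; apply: (nec' hc hw _ wk) => i.
case: (eqVneq i j) => [->|ij]; first by rewrite wj.
case: (eqVneq i j') => [->|ij']; first by rewrite wj'.
by rewrite hIIA // /m ffunE (negbTE ij) (negbTE ij') hU //; case: hc => ->.
Qed.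

Lemma key (j j' : 'I_A) (x : {ffun 'I_N -> sym}) : j != j' -> binary x ->
  s j' (negv x) = neg (s j x).
Proof.
move=> jj bx.
have := half jj bx (or_introl erefl); have := half jj bx (or_intror erefl).
by case: (s j x); case: (s j' (negv x)) => /=; intuition congruence.
Qed.

Lemma same (x : {ffun 'I_N -> sym}) : binary x -> forall j j' : 'I_A, s j x = s j' x.
Proof.
move=> bx j j'; have [k [kj kj']] := third_ord hA j j'.
have E1 : s k (negv x) = neg (s j x) by apply: key => //; rewrite eq_sym.
have E2 : s k (negv x) = neg (s j' x) by apply: key => //; rewrite eq_sym.
by move: E1; rewrite E2; case: (s j x); case: (s j' x).
Qed.

End Main.

Unset Implicit Arguments.

Theorem mainTheorem6 (A N : nat) (hA : 3 <= A) (hN : 2 <= N)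
  (w : matrixAN A N -> pref A) (s : 'I_A -> {ffun 'I_N -> sym} -> sym)
  (hIIA : IIA w s) (hU : unanimity s) (hUD : unrestricted_domain w) :
  (forall (j : 'I_A) (x : {ffun 'I_N -> sym}),
      binary x -> s j (negv x) = neg (s j x)) /\
  (forall x : {ffun 'I_N -> sym}, binary x ->
      forall j j' : 'I_A, s j x = s j' x).
Proof.
have Hs := same hA hIIA hU hUD.
split; last exact: Hs.
move=> j x bx; have [k [kj _]] := third_ord hA j j.
have Hk := key hA hIIA hU hUD (j := k) (j' := j) (x := x) kj bx.
by rewrite Hk (Hs x bx k j).
Qed.
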